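(* Let $f,g\in C[0,1]$. Then $$\underline{\dim}_B G(f\cdot g)\le \max\{\underline{\dim}_B G(f),\ \overline{\dim}_B G(g)\}.$$
   Context: $C[0,1]$ is the space of real-valued continuous functions on $[0,1]$; $G(f)=\{(x,f(x)):x\in[0,1]\}\subset\mathbb{R}^2$ is the graph of $f$; $f\cdot g$ is the pointwise product. For a nonempty bounded set $F$, $N_\delta(F)$ is the smallest number of sets of diameter at most $\delta$ covering $F$, $\overline{\dim}_B F=\limsup_{\delta\to0}\frac{\log N_\delta(F)}{-\log\delta}$ and $\underline{\dim}_B F=\liminf_{\delta\to0}\frac{\log N_\delta(F)}{-\log\delta}$. *)

(* Defs.v *)
From HB Require Import structures.
From mathcomp Require Import all_boot all_order all_algebra.
From mathcomp Require Import all_classical all_reals all_analysis.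
Set Implicit Arguments. Unset Strict Implicit. Unset Printing Implicit Defensive.
Import Order.TTheory GRing.Theory Num.Theory.
Import numFieldTopology.Exports numFieldNormedType.Exports.
Local Open Scope classical_set_scope.
Local Open Scope ring_scope.

Section BoxDim.
Variable R : realType.

Definition dist2 (p q : R * R) : R :=
  Num.sqrt ((p.1 - q.1) ^+ 2 + (p.2 - q.2) ^+ 2).

Definition diam_le (U : set (R * R)) (d : R) : Prop :=
  forall p q, U p -> U q -> dist2 p q <= d.

Definition coverable (F : set (R * R)) (d : R) (n : nat) : Prop :=
  exists U : nat -> set (R * R),
    (forall i, (i < n)%N -> diam_le (U i) d) /\
    F `<=` \bigcup_(i in [set i | (i < n)%N]) U i.

(* N_d(F): the smallest such n (+oo if none) *)
Definition Ncov (F : set (R * R)) (d : R) : \bar R :=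
  ereal_inf [set (n%:R)%:E | n in coverable F d].

Definition box_ratio (F : set (R * R)) (d : R) : \bar R :=
  (ln (fine (Ncov F d)) / - ln d)%:E.

Definition upper_box_dim (F : set (R * R)) : \bar R :=
  limf_esup (box_ratio F) (at_right (0 : R)).
Definition lower_box_dim (F : set (R * R)) : \bar R :=
  limf_einf (box_ratio F) (at_right (0 : R)).

Definition graph (f : R -> R) : set (R * R) :=
  [set (x, f x) | x in `[0, 1]].

End BoxDim.

(* Main.v *)
Require Import Defs.
From HB Require Import structures.
From mathcomp Require Import all_boot all_order all_algebra.
From mathcomp Require Import all_classical all_reals all_analysis.
From mathcomp Require Import zify ring lra.
Set Implicit Arguments. Unset Strict Implicit. Unset Printing Implicit Defensive.
Import Order.TTheory GRing.Theory Num.Theory.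
Import numFieldTopology.Exports numFieldNormedType.Exports.
Local Open Scope classical_set_scope.
Local Open Scope ring_scope.


Section Aux.
Variable R : realType.
Implicit Types (F G : set (R * R)) (d : R).

Lemma coverable_mono F d n m : (n <= m)%N -> coverable F d n -> coverable F d m.
Proof.
move=> nm [U [hU cov]].
exists (fun i => if (i < n)%N then U i else set0); split.
  by move=> i im; case: ifP => [/hU//|_] p q.
move=> p /cov [i /= ilt Uip]; exists i => /=; first exact: leq_trans ilt nm.
by rewrite ilt.
Qed.

Lemma coverable_sub F G d n : F `<=` G -> coverable G d n -> coverable F d n.
Proof. by move=> FG [U [hU cov]]; exists U; split => // p /FG /cov. Qed.

Lemma coverableU F G d n m : coverable F d n -> coverable G d m ->
  coverable (F `|` G) d (n + m).
Proof.
move=> [U [hU cU]] [V [hV cV]].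
exists (fun i => if (i < n)%N then U i else V (i - n)%N); split.
  move=> i im; case: ifP => [/hU//|/negbT]; rewrite -leqNgt => ni.
  apply: hV; lia.
move=> p [/cU [i /= ilt Uip]|/cV [i /= ilt Vip]].
  by exists i => /=; [lia| rewrite ilt].
exists (n + i)%N => /=; first lia.
by rewrite ltnNge leq_addr /= addKn.
Qed.

Lemma coverable_big (Fk : nat -> set (R * R)) d (mk : nat -> nat) K :
  (forall k, (k < K)%N -> coverable (Fk k) d (mk k)) ->
  coverable (\bigcup_(k in [set k | (k < K)%N]) Fk k) d (\sum_(k < K) mk k).
Proof.
elim: K => [|K IH] h.
  by rewrite big_ord0; exists (fun _ => set0); split => // p [k /=].
rewrite big_ord_recr /=.
apply: (@coverable_sub _ ((\bigcup_(k in [set k | (k < K)%N]) Fk k) `|` Fk K)).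
  move=> p [k /= kK Fkp]; have [kK'|Kk] := ltnP k K; first by left; exists k.
  by right; have -> : K = k by lia.
apply: coverableU; last exact: h.
by apply: IH => k kK; apply: h; lia.
Qed.

Lemma NcovP F d n : coverable F d n -> exists n0 : nat,
  [/\ Ncov F d = (n0%:R)%:E, coverable F d n0 &
      forall m, coverable F d m -> (n0 <= m)%N].
Proof.
move=> cn.
have exP : exists n, `[< coverable F d n >] by exists n; exact/asboolP.
case: (ex_minnP exP) => n0 /asboolP c0 hmin.
exists n0; split => //; last by move=> m cm; apply: hmin; exact/asboolP.
apply/le_anti/andP; split.
  by apply: ereal_inf_lbound; exists n0.
apply: le_ereal_inf_tmp => _ [m cm <-].
by rewrite lee_fin ler_nat; apply: hmin; exact/asboolP.
Qed.

End Aux.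

Section Aux2.
Variable R : realType.

Lemma interval_cover (A : nat -> set R) (s : seq nat) (d u v : R) : 0 <= d ->
  (forall i, i \in s -> forall p q, A i p -> A i q -> `|p - q| <= d) ->
  (forall y, u <= y <= v -> exists2 i, i \in s & A i y) ->
  v - u <= (size s)%:R * d.
Proof.
move=> d0; move: (leqnn (size s)); move: {2}(size s) => n.
elim: n s u => [|n IH] s u sn hA hc.
  have [vu|uv] := ltP v u.
    by apply: le_trans (ltW _) (mulr_ge0 _ d0) => //; rewrite subr_lt0.
  have [i + _] := hc u ltac:(by rewrite lexx uv).
  by case: s sn {hA hc}.
have [vu|uv] := ltP v u.
  by apply: le_trans (ltW _) (mulr_ge0 _ d0) => //; rewrite subr_lt0.
have [i si Aiu] := hc u ltac:(by rewrite lexx uv).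
apply/ler_addgt0Pr => e e0.
have [vlt|vge] := ltP v (u + d + e).
  have s1 : (1 <= size s)%N by case: (s) si.
  have : d <= (size s)%:R * d by rewrite ler_peMl // ler1n.
  lra.
set s' := seq.filter (predC1 i) s.
have ss' : (size s' < size s)%N.
  rewrite size_filter -(count_predC (pred1 i)) -add1n leq_add2r.
  by rewrite -has_count has_pred1.
have hs : (size s' <= n)%N by lia.
have h1 : (size s')%:R * d <= (size s).-1%:R * d.
  by rewrite ler_wpM2r // ler_nat; lia.
have h2 : (size s).-1%:R * d + d = (size s)%:R * d.
  have s1 : (1 <= size s)%N by case: (s) si.
  by rewrite -[in RHS](prednK s1) -addn1 natrD mulrDl mul1r.
suff : v - (u + d + e) <= (size s')%:R * d by lra.
apply: IH hs _ _.
  by move=> j; rewrite mem_filter => /andP [_ js]; exact: hA.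
move=> y /andP [y1 y2].
have [j js Ajy] := hc y ltac:(rewrite y2 andbT; lra).
exists j => //; rewrite mem_filter js andbT /=.
apply/eqP => ji; move: Ajy; rewrite ji => Aiy.
have := hA i si y u Aiy Aiu.
have -> : `|y - u| = y - u by rewrite ger0_norm //; lra.
lra.
Qed.
End Aux2.

Section Col.
Variable R : realType.

Lemma dist2_fst (p q : R * R) : `|p.1 - q.1| <= dist2 p q.
Proof.
rewrite /dist2 -sqrtr_sqr ler_sqrt ?addr_ge0 ?sqr_ge0 //.
by rewrite lerDl sqr_ge0.
Qed.

Lemma dist2_snd (p q : R * R) : `|p.2 - q.2| <= dist2 p q.
Proof.
rewrite /dist2 -sqrtr_sqr ler_sqrt ?addr_ge0 ?sqr_ge0 //.
by rewrite lerDr sqr_ge0.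
Qed.

Lemma dist2_le (d : R) (p q : R * R) : 0 < d ->
  `|p.1 - q.1| <= d / 2 -> `|p.2 - q.2| <= d / 2 -> dist2 p q <= d.
Proof.
move=> d0; rewrite !ler_norml => /andP[a1 a2] /andP[b1 b2].
rewrite /dist2 -(ger0_norm (ltW d0)) -sqrtr_sqr ler_sqrt ?sqr_ge0 //.
move: a1 a2 b1 b2; set a := p.1 - q.1; set c := p.2 - q.2 => a1 a2 b1 b2.
have ea : (d/2)^+2 - a^+2 = (d/2 - a) * (d/2 + a) by ring.
have eb : (d/2)^+2 - c^+2 = (d/2 - c) * (d/2 + c) by ring.
have ed : d^+2 = 4 * (d/2)^+2 by field.
have pa : 0 <= (d/2 - a) * (d/2 + a) by apply: mulr_ge0; lra.
have pb : 0 <= (d/2 - c) * (d/2 + c) by apply: mulr_ge0; lra.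
have : 0 <= (d/2)^+2 by exact: sqr_ge0.
lra.
Qed.

Definition colset (d : R) (k : nat) : set R :=
  [set x | x \in `[0, 1] /\ k%:R * (d / 2) <= x <= k.+1%:R * (d / 2)].

Definition gcol (d : R) (h : R -> R) (k : nat) : set (R * R) :=
  [set (x, h x) | x in colset d k].

Lemma col_cover (d : R) (h : R -> R) k b m : 0 < d ->
  (forall x, colset d k x -> b <= h x <= b + m%:R * (d / 2)) ->
  coverable (gcol d h k) d m.+1.
Proof.
move=> d0 hb.
exists (fun j : nat => [set p : R * R | k%:R * (d / 2) <= p.1 <= k.+1%:R * (d / 2) /\
   b + j%:R * (d / 2) <= p.2 <= b + j.+1%:R * (d / 2)]); split.
  move=> j _ p q [/andP[p1 p2] /andP[p3 p4]] [/andP[q1 q2] /andP[q3 q4]].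
  apply: dist2_le => //; rewrite ler_norml; move: p2 q2 p4 q4;
  rewrite -[k.+1]addn1 -[j.+1]addn1 !natrD => *; apply/andP; split; lra.
move=> _ [x cx <-]; have /andP[h1 h2] := hb x cx.
set r := (h x - b) / (d / 2).
have hr : r * (d / 2) = h x - b by rewrite /r divfK // gt_eqF // divr_gt0.
have t0 : 0 <= r by rewrite /r divr_ge0 // ?subr_ge0 // ltW // divr_gt0.
have /andP[t1 t2] := truncn_itv t0.
exists (Num.truncn r) => /=.
  rewrite ltnS truncn_le_nat -[m.+1]addn1 natrD.
  have : r * (d / 2) <= m%:R * (d / 2) by lra.
  rewrite ler_pM2r ?divr_gt0 //; lra.
split; first by case: cx.
move: t2; rewrite -[(Num.truncn r).+1]addn1 natrD => t2.
have e1 : (Num.truncn r)%:R * (d/2) <= r * (d/2) by rewrite ler_pM2r ?divr_gt0.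
have e2 : r * (d/2) <= ((Num.truncn r)%:R + 1) * (d/2).
  by rewrite ler_pM2r ?divr_gt0 // ltW.
rewrite mulrDl mul1r in e2.
apply/andP; split; lra.
Qed.

End Col.

Section Osc.
Variable R : realType.

Lemma osc_bound (d : R) (f : R -> R) a (U : nat -> set (R * R)) k x y :
  0 < d -> {within `[0, 1], continuous f} ->
  (forall i, (i < a)%N -> diam_le (U i) d) ->
  graph f `<=` \bigcup_(i in [set i | (i < a)%N]) U i ->
  colset d k x -> colset d k y ->
  `|f x - f y| <= (\sum_(0 <= i < a)
      (`[< exists z, colset d k z /\ U i (z, f z) >] : nat))%:R * d.
Proof.
move=> d0 fc hU cov.
set Pb := fun i => `[< exists z, colset d k z /\ U i (z, f z) >].
set s := [seq i <- index_iota 0 a | Pb i].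
have ss : size s = \sum_(0 <= i < a) (Pb i : nat).
  rewrite size_filter -sum1_count big_mkcond /=; apply: eq_bigr => i _.
  by case: (Pb i).
rewrite -ss.
suff key : forall x y, colset d k x -> colset d k y -> x <= y ->
    Num.max (f x) (f y) - Num.min (f x) (f y) <= (size s)%:R * d.
  move=> cx cy.
  have H : forall x y, colset d k x -> colset d k y -> x <= y ->
      `|f x - f y| <= (size s)%:R * d.
    move=> x' y' cx' cy' xy'; have := key x' y' cx' cy' xy'.
    have [fxy|fxy] := leP (f x') (f y').
      by rewrite distrC ger0_norm ?subr_ge0.
    by rewrite ger0_norm ?subr_ge0 // ltW.
  have [xy|yx] := leP x y; first exact: H.
  by rewrite distrC; apply: H => //; exact: ltW.
move=> {}x {}y cx cy xy.
have cxy : forall t, x <= t <= y -> colset d k t.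
  move: cx cy => [+ /andP[x1 x2]] [+ /andP[y1 y2]].
  rewrite !in_itv /= => /andP[x3 x4] /andP[y3 y4] t /andP[t1 t2].
  split; first by rewrite in_itv /=; apply/andP; split; lra.
  apply/andP; split; lra.
have fc' : {within `[x, y], continuous f}.
  apply: continuous_subspaceW fc => t /=; rewrite in_itv /= => /andP [t1 t2].
  by have [] := cxy t ltac:(by rewrite t1 t2).
apply: (@interval_cover R (fun i => [set t | exists z, U i (z, t)])); first exact: ltW.
  move=> i; rewrite mem_filter mem_index_iota => /andP[_ ia] p q [z1 Up] [z2 Uq].
  apply: le_trans (dist2_snd (z1, p) (z2, q)) _.
  exact: (hU i ia _ _ Up Uq).
move=> t ht; have [c cc fct] := IVT xy fc' ht.
move: cc; rewrite in_itv /= => cc.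
have cc' := cxy c cc.
have [i /= ia Uic] : (\bigcup_(i in [set i | (i < a)%N]) U i) (c, f c).
  by apply: cov; exists c => //; case: cc'.
exists i.
  rewrite mem_filter mem_index_iota leq0n ia !andbT /Pb; apply/asboolP.
  by exists c.
by exists c; rewrite -fct.
Qed.

End Osc.

Lemma sum_b2n (r : seq nat) (P : pred nat) :
  (\sum_(k <- r) (P k : nat) = count P r)%N.
Proof. by elim: r => [|x r IH]; rewrite ?big_nil ?big_cons ?IH. Qed.

Section Cnt.
Variable R : realType.

Lemma cols_close (d : R) (f : R -> R) (V : set (R * R)) k1 k2 : 0 < d ->
  diam_le V d ->
  (exists z, colset d k1 z /\ V (z, f z)) ->
  (exists z, colset d k2 z /\ V (z, f z)) -> (k2 <= k1 + 3)%N.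
Proof.
move=> d0 hV [z1 [[_ /andP[a1 a2]] V1]] [z2 [[_ /andP[b1 b2]] V2]].
have := le_trans (dist2_fst (z1, f z1) (z2, f z2)) (hV _ _ V1 V2).
rewrite /= ler_norml => /andP[c1 c2].
have : k2%:R * (d / 2) <= (k1 + 3)%:R * (d / 2).
  move: a2; rewrite -[k1.+1]addn1 !natrD => a2; lra.
by rewrite ler_pM2r ?divr_gt0 // ler_nat.
Qed.

Lemma count_cols (d : R) (f : R -> R) a (U : nat -> set (R * R)) K : 0 < d ->
  (forall i, (i < a)%N -> diam_le (U i) d) ->
  (\sum_(0 <= k < K) \sum_(0 <= i < a)
      (`[< exists z, colset d k z /\ U i (z, f z) >] : nat) <= 7 * a)%N.
Proof.
move=> d0 hU.
rewrite exchange_big /=.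
apply: (@leq_trans (\sum_(0 <= i < a) 7)); last first.
  by rewrite sum_nat_const_nat subn0 mulnC.
rewrite big_seq_cond [X in (_ <= X)%N]big_seq_cond; apply: leq_sum => i.
rewrite andbT mem_index_iota => /andP[_ ia].
rewrite sum_b2n.
set P := (fun k => _) in |- *.
have [[k1 Pk1]|noP] := pselect (exists k1, P k1).
  rewrite -size_filter.
  have -> : 7%N = size (iota (k1 - 3) 7) by rewrite size_iota.
  apply: uniq_leq_size; first by rewrite filter_uniq // iota_uniq.
  move=> k; rewrite mem_filter => /andP[Pk _].
  have h1 := cols_close d0 (hU i ia) (asboolW Pk1) (asboolW Pk).
  have h2 := cols_close d0 (hU i ia) (asboolW Pk) (asboolW Pk1).
  rewrite mem_iota; apply/andP; split; lia.
rewrite (@eq_in_count _ _ pred0); first by rewrite count_pred0.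
by move=> k _ /=; apply/negP => Pk; apply: noP; exists k.
Qed.

End Cnt.

Lemma sum_helper (c K : nat) (x y : nat -> nat) :
  (\sum_(0 <= k < K) (c * (x k + y k)).+1 =
   c * \sum_(0 <= k < K) x k + c * \sum_(0 <= k < K) y k + K)%N.
Proof.
elim: K => [|K IH]; first by rewrite !big_geq // muln0 addn0.
rewrite !big_nat_recr //= IH; lia.
Qed.

Section Main.
Variable R : realType.

Lemma cover_ge (d : R) (f : R -> R) a : 0 < d ->
  coverable (graph f) d a -> 1 <= a%:R * d.
Proof.
move=> d0 [U [hU cov]].
have := @interval_cover R (fun i => [set x | exists y, U i (x, y)])
  (index_iota 0 a) d 0 1 (ltW d0).
rewrite size_iota subn0 subr0; apply.
  move=> i; rewrite mem_index_iota => /andP[_ ia] p q [y1 U1] [y2 U2].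
  exact: le_trans (dist2_fst (p, y1) (q, y2)) (hU i ia _ _ U1 U2).
move=> y hy.
have [i /= ia Ui] : (\bigcup_(i in [set i | (i < a)%N]) U i) (y, f y).
  by apply: cov; exists y => //; rewrite in_itv.
by exists i; [rewrite mem_index_iota ia | exists (f y)].
Qed.

Lemma main_cover (d : R) (f g : R -> R) (B a b : nat) : 0 < d ->
  {within `[0, 1], continuous f} -> {within `[0, 1], continuous g} ->
  (forall x, x \in `[0, 1] -> `|f x| <= B%:R /\ `|g x| <= B%:R) ->
  coverable (graph f) d a -> coverable (graph g) d b ->
  coverable (graph (f \* g)) d ((28 * B + 3) * (a + b)).
Proof.
move=> d0 fc gc hB cfa cgb.
have ad := cover_ge d0 cfa.
have [U [hU covU]] := cfa; have [V [hV covV]] := cgb.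
set K := (Num.truncn (2 / d)).+1.
have d20 : 0 < d / 2 by rewrite divr_gt0.
have a1 : (1 <= a)%N.
  case: (a) ad => [|//]; rewrite mul0r; lra.
have KA : (K <= 3 * a)%N.
  rewrite -(ler_nat R) /K -[(Num.truncn _).+1]addn1 natrD natrM.
  have t1 : (Num.truncn (2 / d))%:R <= 2 / d by rewrite truncn_le divr_ge0 // ltW.
  have t2 : 2 / d <= 2 * a%:R by rewrite ler_pdivrMr //; lra.
  have : (1 : R) <= a%:R by rewrite ler1n.
  lra.
set cf := fun k => (\sum_(0 <= i < a)
      (`[< exists z, colset d k z /\ U i (z, f z) >] : nat))%N.
set cg := fun k => (\sum_(0 <= i < b)
      (`[< exists z, colset d k z /\ V i (z, g z) >] : nat))%N.
set mk := fun k => (4 * B * (cf k + cg k)).+1.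
have hcol : forall k, (k < K)%N -> coverable (gcol d (f \* g) k) d (mk k).
  move=> k _; rewrite /mk.
  have [[x0 cx0]|nox] := pselect (exists x0, colset d k x0); last first.
    apply: (@col_cover R d _ k 0) => // x cx.
    by exfalso; apply: nox; exists x.
  set L := B%:R * ((cg k)%:R * d) + B%:R * ((cf k)%:R * d).
  have eL : (4 * B * (cf k + cg k))%:R * (d / 2) = 2 * L.
    by rewrite /L !natrM natrD; field.
  apply: (@col_cover R d _ k ((f \* g) x0 - L)) => // x cx.
  rewrite eL.
  have of1 := osc_bound d0 fc hU covU cx cx0.
  have og1 := osc_bound d0 gc hV covV cx cx0.
  have [hfx _] := hB x (proj1 cx).
  have [_ hgx0] := hB x0 (proj1 cx0).
  have e : (f \* g) x - (f \* g) x0 = f x * (g x - g x0) + g x0 * (f x - f x0).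
    by rewrite /=; ring.
  have : `|(f \* g) x - (f \* g) x0| <= L.
    rewrite e; apply: le_trans (ler_normD _ _) _; rewrite !normrM /L.
    apply: lerD; apply: ler_pM => //; exact: normr_ge0.
  rewrite ler_norml => /andP[h1 h2].
  apply/andP; split; lra.
have cov := coverable_big hcol.
have sub : graph (f \* g) `<=` \bigcup_(k in [set k | (k < K)%N]) gcol d (f \* g) k.
  move=> _ [x x01' <-].
  have x01 : x \in `[0, 1]%R := x01'.
  have [x0' x1'] : 0 <= x /\ x <= 1 by move: x01; rewrite in_itv /= => /andP[].
  have x0 : 0 <= x / (d / 2) by rewrite divr_ge0 // ltW.
  have /andP[t1 t2] := truncn_itv x0.
  exists (Num.truncn (x / (d / 2))) => /=.
    rewrite /K ltnS truncn_le_nat.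
    apply: le_lt_trans (truncnS_gt _).
    rewrite ler_pdivrMr // mulrA divfK ?gt_eqF //.
    by rewrite divff // pnatr_eq0.
  exists x => //; split => //.
  move: t2; rewrite -[(Num.truncn _).+1]addn1 natrD => t2.
  have e1 : (Num.truncn (x / (d/2)))%:R * (d/2) <= x / (d/2) * (d/2).
    by rewrite ler_pM2r.
  have e2 : x / (d/2) * (d/2) <= ((Num.truncn (x / (d/2)))%:R + 1) * (d/2).
    by rewrite ler_pM2r // ltW.
  rewrite divfK ?gt_eqF // in e1 e2.
  rewrite mulrDl mul1r in e2.
  apply/andP; split; lra.
apply: coverable_sub sub _.
apply: coverable_mono cov.
rewrite -(big_mkord xpredT mk) /mk.
have -> : (\sum_(0 <= k < K) (4 * B * (cf k + cg k)).+1 =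
    4 * B * (\sum_(0 <= k < K) cf k) + 4 * B * (\sum_(0 <= k < K) cg k) + K)%N.
  exact: sum_helper.
have := count_cols f K d0 hU.
have := count_cols g K d0 hV.
rewrite /cf /cg.
nia.
Qed.

End Main.

Section Lim.
Variable R : realType.

Lemma le_from_gt (x T : \bar R) :
  (forall t : R, (T < t%:E)%E -> (x <= t%:E)%E) -> (x <= T)%E.
Proof.
case: T => [r| |] H.
- apply/lee_addgt0Pr => e e0; apply: H; rewrite lte_fin; lra.
- exact: leey.
- case: x H => [s| |] H //.
  + have := H (s - 1)%R (ltNyr _); rewrite lee_fin => h; exfalso; lra.
  + by have := H 0%R (ltNyr _).
Qed.

Lemma between (T : \bar R) (t : R) : (T < t%:E)%E -> exists s : R, (T < s%:E)%E /\ s < t.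
Proof.
case: T => [r| |] //.
- by rewrite lte_fin => rt; exists ((r + t) / 2); rewrite lte_fin; split; lra.
- by move=> _; exists (t - 1); split; [exact: ltNyr|lra].
Qed.

Lemma lim_key (u v w : R -> R) (c0 : R) : 0 <= c0 ->
  (forall d, 0 < d < 1 -> w d <= c0 / (- ln d) + Num.max (u d) (v d)) ->
  (limf_einf (fun d => (w d)%:E) (at_right (0 : R)) <=
   maxe (limf_einf (fun d => (u d)%:E) (at_right (0 : R)))
        (limf_esup (fun d => (v d)%:E) (at_right (0 : R))))%E.
Proof.
move=> c00 hw.
rewrite limf_einfE; apply: ge_ereal_sup => _ [V FV <-].
apply: le_from_gt => t Tt.
have [s [Ts st]] := between Tt.
have Ug : (limf_esup (fun d => (v d)%:E) (at_right (0 : R)) < s%:E)%E.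
  by apply: le_lt_trans Ts; rewrite le_max lexx orbT.
have Lf : (limf_einf (fun d => (u d)%:E) (at_right (0 : R)) < s%:E)%E.
  by apply: le_lt_trans Ts; rewrite le_max lexx.
rewrite limf_esupE in Ug; have [_ [W FW <-] supW] := ereal_inf_lt Ug.
have vW : forall d, W d -> v d < s.
  move=> d Wd; rewrite -lte_fin; apply: le_lt_trans supW.
  by apply: ereal_sup_ubound; exists d.
set eta := t - s.
have eta0 : 0 < eta by rewrite /eta; lra.
set d1 := expR (- (c0 / eta + 1)).
have ce0 : 0 <= c0 / eta by rewrite divr_ge0 // ltW.
have d1lt : d1 < 1 by rewrite /d1 expR_lt1; lra.
have d10 : 0 < d1 by exact: expR_gt0.
set Z := [set d : R | 0 < d < d1].
have FZ : (at_right (0 : R)) Z.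
  near=> d; apply/andP; split; near: d; [exact: nbhs_right_gt| exact: nbhs_right_lt].
have hd : forall d, 0 < d < d1 -> d < 1 /\ c0 / (- ln d) < eta.
  move=> d /andP[d0 dd1]; split; first lra.
  have : ln d < ln d1 by rewrite ltr_ln // posrE.
  rewrite /d1 expRK => lnd.
  have lnd0 : 0 < - ln d by lra.
  rewrite ltr_pdivrMr //.
  have : c0 / eta < - ln d - 1 by lra.
  rewrite ltr_pdivrMr //.
  have -> : (- ln d - 1) * eta = eta * (- ln d) - eta by ring.
  lra.
have FV' : (at_right (0 : R)) (V `&` W `&` Z).
  by apply: filterI => //; apply: filterI.
rewrite limf_einfE in Lf.
have : (ereal_inf ((fun d => (u d)%:E) @` (V `&` W `&` Z)) < s%:E)%E.
  apply: le_lt_trans Lf; apply: ereal_sup_ubound.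
  by exists (V `&` W `&` Z).
move=> /ereal_inf_lt [_ [d [[Vd Wd] Zd] <-]]; rewrite lte_fin => uds.
have [dlt1 ce] := hd d Zd.
have d0 : 0 < d by move: Zd => /andP[].
have := hw d ltac:(by rewrite d0 dlt1).
have : Num.max (u d) (v d) < s by rewrite gt_max uds vW.
move=> mx wd.
apply: le_trans (_ : (w d)%:E <= t%:E)%E.
  by apply: ereal_inf_lbound; exists d.
rewrite lee_fin /eta in ce *; lra.
Unshelve. all: by end_near.
Qed.

End Lim.

Section Fin.
Variable R : realType.

Lemma bounded01 (f : R -> R) : {within `[0, 1], continuous f} ->
  exists B : R, 0 <= B /\ forall x, x \in `[0, 1] -> `|f x| <= B.
Proof.
move=> fc.
have [c1 _ h1] := EVT_max ler01 fc.
have [c2 _ h2] := EVT_min ler01 fc.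
exists (`|f c1| + `|f c2|); split; first by rewrite addr_ge0.
move=> x x01; rewrite ler_norml.
have := h1 x x01; have := h2 x x01.
have := normr_ge0 (f c2); have := normr_ge0 (f c1); have := ler_norm (f c1); have := ler_norm (- f c2); rewrite normrN.
move=> *; apply/andP; split; lra.
Qed.

Lemma graph_sub_cols (d : R) (h : R -> R) : 0 < d ->
  graph h `<=` \bigcup_(k in [set k | (k < (Num.truncn (2 / d)).+1)%N]) gcol d h k.
Proof.
move=> d0 _ [x x01' <-].
have x01 : x \in `[0, 1]%R := x01'.
have d20 : 0 < d / 2 by rewrite divr_gt0.
have [x0' x1'] : 0 <= x /\ x <= 1 by move: x01; rewrite in_itv /= => /andP[].
have x0 : 0 <= x / (d / 2) by rewrite divr_ge0 // ltW.
have /andP[t1 t2] := truncn_itv x0.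
exists (Num.truncn (x / (d / 2))) => /=.
  rewrite ltnS truncn_le_nat.
  apply: le_lt_trans (truncnS_gt _).
  rewrite ler_pdivrMr // mulrA divfK ?gt_eqF //.
  by rewrite divff // pnatr_eq0.
exists x => //; split => //.
move: t2; rewrite -[(Num.truncn _).+1]addn1 natrD => t2.
have e1 : (Num.truncn (x / (d/2)))%:R * (d/2) <= x / (d/2) * (d/2).
  by rewrite ler_pM2r.
have e2 : x / (d/2) * (d/2) <= ((Num.truncn (x / (d/2)))%:R + 1) * (d/2).
  by rewrite ler_pM2r // ltW.
rewrite divfK ?gt_eqF // in e1 e2.
rewrite mulrDl mul1r in e2.
apply/andP; split; lra.
Qed.

Lemma graph_coverable (d : R) (h : R -> R) (B : R) : 0 < d -> 0 <= B ->
  (forall x, x \in `[0, 1] -> `|h x| <= B) -> exists n, coverable (graph h) d n.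
Proof.
move=> d0 B0 hB.
set m := (Num.truncn (4 * B / d)).+1.
have hm : 2 * B <= m%:R * (d / 2).
  have e : 4 * B / d * (d / 2) = 2 * B by field; rewrite gt_eqF.
  have : 4 * B / d * (d / 2) <= m%:R * (d / 2).
    by rewrite ler_pM2r ?divr_gt0 // ltW // truncnS_gt.
  lra.
exists (\sum_(k < (Num.truncn (2 / d)).+1) m.+1)%N.
have HH := graph_sub_cols (h := h) d0. apply: (coverable_sub HH).
apply: (coverable_big (mk := fun _ => m.+1)) => k _.
apply: (@col_cover R d h k (- B) m d0) => x [x01 _].
have := hB x x01; rewrite ler_norml => /andP[a1 a2].
apply/andP; split; lra.
Qed.

Lemma ncov_pos (d : R) (h : R -> R) n : 0 < d -> coverable (graph h) d n -> (1 <= n)%N.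
Proof.
move=> d0 c; have := cover_ge d0 c.
by case: n {c} => [|//]; rewrite mul0r; lra.
Qed.

Definition ratio (F : set (R * R)) (d : R) : R := ln (fine (Ncov F d)) / - ln d.

End Fin.

Unset Implicit Arguments.
Set Strict Implicit.
Set Printing Implicit Defensive.

Theorem proposition3p6 (R : realType) (f g : R -> R)
  (hf : {within `[0, 1], continuous f})
  (hg : {within `[0, 1], continuous g}) :
  (lower_box_dim (graph (f \* g)%R)
   <= maxe (lower_box_dim (graph f)) (upper_box_dim (graph g)))%E.
Proof.
have [Bf [Bf0 hBf]] := bounded01 hf.
have [Bg [Bg0 hBg]] := bounded01 hg.
set B := (Num.truncn (Bf + Bg)).+1.
have BB : Bf + Bg <= B%:R by apply: ltW; exact: truncnS_gt.
have hB : forall x, x \in `[0, 1] -> `|f x| <= B%:R /\ `|g x| <= B%:R.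
  by move=> x x01; have := hBf x x01; have := hBg x x01; split; lra.
set C := (28 * B + 3)%N.
have C1 : (1 : R) <= 2 * C%:R.
  have : (1 : R) <= C%:R by rewrite ler1n /C; lia.
  lra.
apply: (@lim_key R (ratio (graph f)) (ratio (graph g)) (ratio (graph (f \* g)))
  (ln (2 * C%:R))); first exact: ln_ge0.
move=> d /andP[d0 d1].
have [nf0 cf0] := graph_coverable d0 Bf0 hBf.
have [ng0 cg0] := graph_coverable d0 Bg0 hBg.
have [nf [Ef cf mf]] := NcovP cf0.
have [ng [Eg cg mg]] := NcovP cg0.
have cfg0 := main_cover d0 hf hg hB cf cg.
have [nfg [Efg cfg mfg]] := NcovP cfg0.
have le1 := mfg _ cfg0.
have pf := ncov_pos d0 cf; have pg := ncov_pos d0 cg; have pfg := ncov_pos d0 cfg.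
rewrite /ratio Ef Eg Efg /=.
have L0 : 0 < - ln d by rewrite oppr_gt0 ln_lt0 // d0 d1.
have Li : 0 <= (- ln d)^-1 by rewrite invr_ge0 ltW.
have key : forall n : nat, (nf <= n)%N -> (ng <= n)%N ->
    ln (nfg%:R : R) <= ln (2 * C%:R) + ln (n%:R : R).
  move=> n hn1 hn2.
  have n1 : (1 <= n)%N by lia.
  have : (nfg <= 2 * C * n)%N.
    apply: leq_trans le1 _; rewrite /C.
    have : (nf + ng <= 2 * n)%N by lia.
    move=> h2; apply: leq_trans (leq_mul (leqnn _) h2) _.
    by rewrite mulnA [(_ * 2)%N]mulnC.
  rewrite -(ler_nat R) => h.
  have hp1 : (0 : R) < 2 * C%:R by lra.
  have hp2 : (0 : R) < n%:R by rewrite ltr0n.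
  have hp3 : (0 : R) < nfg%:R by rewrite ltr0n.
  rewrite -lnM ?posrE // ler_ln ?posrE ?mulr_gt0 //.
  by rewrite !natrM in h.
have [le|lt] := leqP nf ng.
  have k := key ng le (leqnn _).
  apply: le_trans (_ : (ln (2 * C%:R) + ln ng%:R) / - ln d <= _).
    exact: ler_wpM2r.
  rewrite mulrDl lerD2l le_max; apply/orP; right; exact: lexx.
have k := key nf (leqnn _) (ltnW lt).
apply: le_trans (_ : (ln (2 * C%:R) + ln nf%:R) / - ln d <= _).
  exact: ler_wpM2r.
rewrite mulrDl lerD2l le_max; apply/orP; left; exact: lexx.
Qed.
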